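(* The compactness theorem holds for modal team logic $\mathrm{MTL}$.
   Context: $\mathrm{MTL}$ is the closure of modal logic $\mathrm{ML}$ under the strong negation $\sim$, the material implication (written here $\varphi\Rightarrow\psi$, true iff the valuation falsifies $\varphi$ or satisfies $\psi$), the linear implication $\multimap$ (lax splitting: $T\models\varphi\multimap\psi$ iff for all $S\cup U=T$, $S\models\varphi$ implies $U\models\psi$), and the modalities $\Box$ and $\Delta$. Valuations are pairs $(\mathcal{K},T)$ of a Kripke structure and a team $T$ of worlds; a classical $\mathrm{ML}$ formula holds iff it holds at every world of $T$; $(\mathcal{K},T)\models\Box\varphi$ iff the global successor team $R[T]$ satisfies $\varphi$; $(\mathcal{K},T)\models\Delta\varphi$ iff every successor team $T'$ of $T$ (every $w\in T$ has a successor in $T'$ and every $v\in T'$ has a predecessor in $T$) satisfies $\varphi$. It follows from the soundness and completeness of the system $\mathsf{H}^\Box\mathsf{L}\mathsf{S}\mathsf{M}$ for $\mathrm{MTL}$. *)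

(* Defs.v *)
From Stdlib Require Import List.


Inductive ML (P : Type) : Type :=
| MLatom : P -> ML P
| MLneg : ML P -> ML P
| MLand : ML P -> ML P -> ML P
| MLor : ML P -> ML P -> ML P
| MLbox : ML P -> ML P
| MLdia : ML P -> ML P.

Inductive MTL (P : Type) : Type :=
| Mml : ML P -> MTL P
| Msneg : MTL P -> MTL P
| Mimp : MTL P -> MTL P -> MTL P
| Mlimp : MTL P -> MTL P -> MTL P
| Mbox : MTL P -> MTL P
| Mdelta : MTL P -> MTL P.
Arguments MLatom {P}. Arguments MLneg {P}. Arguments MLand {P}.
Arguments MLor {P}. Arguments MLbox {P}. Arguments MLdia {P}.
Arguments Mml {P}. Arguments Msneg {P}. Arguments Mimp {P}.
Arguments Mlimp {P}. Arguments Mbox {P}. Arguments Mdelta {P}.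

Record Kripke (P : Type) : Type := {
  world : Type;
  rel : world -> world -> Prop;
  val : P -> world -> Prop
}.

Arguments world {P}. Arguments rel {P}. Arguments val {P}.

Definition team {P : Type} (K : Kripke P) := world K -> Prop.

Fixpoint ml_sat {P : Type} (K : Kripke P) (w : world K) (a : ML P) : Prop :=
  match a with
  | MLatom p => val K p w
  | MLneg a => ~ ml_sat K w a
  | MLand a b => ml_sat K w a /\ ml_sat K w b
  | MLor a b => ml_sat K w a \/ ml_sat K w b
  | MLbox a => forall v, rel K w v -> ml_sat K v a
  | MLdia a => exists v, rel K w v /\ ml_sat K v a
  end.

Definition image {P : Type} (K : Kripke P) (T : team K) : team K :=
  fun v => exists w, T w /\ rel K w v.

Definition succ_team {P : Type} (K : Kripke P) (T T' : team K) : Prop :=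
  (forall w, T w -> exists v, T' v /\ rel K w v) /\
  (forall v, T' v -> exists w, T w /\ rel K w v).

Fixpoint sat {P : Type} (K : Kripke P) (T : team K) (f : MTL P) : Prop :=
  match f with
  | Mml a => forall w, T w -> ml_sat K w a
  | Msneg f => ~ sat K T f
  | Mimp f g => ~ sat K T f \/ sat K T g
  | Mlimp f g => forall S U : team K,
      (forall w, T w <-> (S w \/ U w)) -> sat K S f -> sat K U g
  | Mbox f => sat K (image K T) f
  | Mdelta f => forall T' : team K, succ_team K T T' -> sat K T' f
  end.

Definition entails {P : Type} (Phi : MTL P -> Prop) (psi : MTL P) : Prop :=
  forall (K : Kripke P) (T : team K),
    (forall phi, Phi phi -> sat K T phi) -> sat K T psi.

(* Main.v *)
Require Import Defs.
From Stdlib Require Import List Classical ClassicalEpsilon Lia.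
Import ListNotations.

Section Main.
Variable P : Type.

Fixpoint mldepth (a : ML P) : nat := match a with
 | MLatom _ => 0 | MLneg a => mldepth a
 | MLand a b | MLor a b => Nat.max (mldepth a) (mldepth b)
 | MLbox a | MLdia a => S (mldepth a) end.
Fixpoint mlatoms (a : ML P) : list P := match a with
 | MLatom p => [p] | MLneg a => mlatoms a
 | MLand a b | MLor a b => mlatoms a ++ mlatoms b
 | MLbox a | MLdia a => mlatoms a end.
Fixpoint mdepth (f : MTL P) : nat := match f with
 | Mml a => mldepth a | Msneg f => mdepth f
 | Mimp f g | Mlimp f g => Nat.max (mdepth f) (mdepth g)
 | Mbox f | Mdelta f => S (mdepth f) end.
Fixpoint matoms (f : MTL P) : list P := match f with
 | Mml a => mlatoms a | Msneg f => matoms f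
 | Mimp f g | Mlimp f g => matoms f ++ matoms g
 | Mbox f | Mdelta f => matoms f end.

Fixpoint bis (A : list P) (k : nat) {K1 K2 : Kripke P} (w1 : world K1) (w2 : world K2) : Prop :=
  (forall p, In p A -> (val K1 p w1 <-> val K2 p w2)) /\
  match k with 0 => True | S k =>
   (forall v1, rel K1 w1 v1 -> exists v2, rel K2 w2 v2 /\ bis A k v1 v2) /\
   (forall v2, rel K2 w2 v2 -> exists v1, rel K1 w1 v1 /\ bis A k v1 v2) end.

Lemma bis_sym A k : forall K1 K2 (w1 : world K1) (w2 : world K2),
  bis A k w1 w2 -> bis A k w2 w1.
Proof.
  induction k; simpl; intros K1 K2 w1 w2 [Ha H].
  - split; auto. intros p Hp; symmetry; auto.
  - destruct H as [Hf Hb]. split; [intros p Hp; symmetry; auto|split].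
    + intros v Hv. destruct (Hb v Hv) as [v1 [? ?]]. eauto.
    + intros v Hv. destruct (Hf v Hv) as [v1 [? ?]]. eauto.
Qed.

Lemma bis_ml A : forall a k K1 K2 (w1 : world K1) (w2 : world K2),
  mldepth a <= k -> incl (mlatoms a) A -> bis A k w1 w2 ->
  (ml_sat K1 w1 a <-> ml_sat K2 w2 a).
Proof.
  induction a; intros k K1 K2 w1 w2 Hd Hat Hb; simpl in *.
  - destruct k; destruct Hb as [Ha _]; apply Ha, Hat; left; auto.
  - rewrite (IHa k K1 K2 w1 w2); tauto.
  - apply incl_app_inv in Hat as [H1 H2].
    rewrite (IHa1 k K1 K2 w1 w2), (IHa2 k K1 K2 w1 w2); try tauto; lia.
  - apply incl_app_inv in Hat as [H1 H2].
    rewrite (IHa1 k K1 K2 w1 w2), (IHa2 k K1 K2 w1 w2); try tauto; lia.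
  - destruct k as [|k]; [lia|]. destruct Hb as [_ [Hf Hb]]. split.
    + intros H v2 Hv2. destruct (Hb v2 Hv2) as [v1 [Hr Hbv]].
      apply (IHa k K1 K2 v1 v2); auto; lia.
    + intros H v1 Hv1. destruct (Hf v1 Hv1) as [v2 [Hr Hbv]].
      apply (IHa k K1 K2 v1 v2); auto; lia.
  - destruct k as [|k]; [lia|]. destruct Hb as [_ [Hf Hb]]. split.
    + intros [v1 [Hv1 H]]. destruct (Hf v1 Hv1) as [v2 [Hr Hbv]].
      exists v2; split; auto. apply (IHa k K1 K2 v1 v2); auto; lia.
    + intros [v2 [Hv2 H]]. destruct (Hb v2 Hv2) as [v1 [Hr Hbv]].
      exists v1; split; auto. apply (IHa k K1 K2 v1 v2); auto; lia.
Qed.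

Definition TE A k {K1 K2 : Kripke P} (T1 : team K1) (T2 : team K2) : Prop :=
  (forall w1, T1 w1 -> exists w2, T2 w2 /\ bis A k w1 w2) /\
  (forall w2, T2 w2 -> exists w1, T1 w1 /\ bis A k w1 w2).

Lemma TE_sym A k K1 K2 (T1 : team K1) (T2 : team K2) : TE A k T1 T2 -> TE A k T2 T1.
Proof.
  intros [H1 H2]; split.
  - intros w Hw; destruct (H2 w Hw) as [x [? ?]]; eauto using bis_sym.
  - intros w Hw; destruct (H1 w Hw) as [x [? ?]]; eauto using bis_sym.
Qed.

Lemma split_lemma A k K1 K2 (T1 : team K1) (T2 S2 U2 : team K2) :
  TE A k T1 T2 -> (forall w, T2 w <-> (S2 w \/ U2 w)) ->
  exists S1 U1 : team K1, (forall w, T1 w <-> (S1 w \/ U1 w)) /\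
    TE A k S1 S2 /\ TE A k U1 U2.
Proof.
  intros [H1 H2] Hs.
  exists (fun w => T1 w /\ exists w2, S2 w2 /\ bis A k w w2).
  exists (fun w => T1 w /\ exists w2, U2 w2 /\ bis A k w w2).
  split; [|split; split].
  - intros w; split.
    + intros Hw. destruct (H1 w Hw) as [w2 [Hw2 Hb]].
      apply Hs in Hw2 as [?|?]; [left|right]; eauto.
    + intros [[? _]|[? _]]; auto.
  - intros w [_ [w2 [? ?]]]; eauto.
  - intros w2 Hw2. destruct (H2 w2 (proj2 (Hs w2) (or_introl Hw2))) as [w1 [? ?]].
    exists w1; split; eauto.
  - intros w [_ [w2 [? ?]]]; eauto.
  - intros w2 Hw2. destruct (H2 w2 (proj2 (Hs w2) (or_intror Hw2))) as [w1 [? ?]].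
    exists w1; split; eauto.
Qed.

Lemma image_lemma A k K1 K2 (T1 : team K1) (T2 : team K2) :
  TE A (S k) T1 T2 -> TE A k (image K1 T1) (image K2 T2).
Proof.
  intros [H1 H2]; split.
  - intros v1 [w1 [Hw1 Hr]]. destruct (H1 w1 Hw1) as [w2 [Hw2 [_ [Hf _]]]].
    destruct (Hf v1 Hr) as [v2 [? ?]]. exists v2; split; auto. exists w2; auto.
  - intros v2 [w2 [Hw2 Hr]]. destruct (H2 w2 Hw2) as [w1 [Hw1 [_ [_ Hb]]]].
    destruct (Hb v2 Hr) as [v1 [? ?]]. exists v1; split; auto. exists w1; auto.
Qed.

Lemma succ_lemma A k K1 K2 (T1 : team K1) (T2 T2' : team K2) :
  TE A (S k) T1 T2 -> succ_team K2 T2 T2' ->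
  exists T1', succ_team K1 T1 T1' /\ TE A k T1' T2'.
Proof.
  intros [H1 H2] [S1 S2].
  exists (fun v1 => image K1 T1 v1 /\ exists v2, T2' v2 /\ bis A k v1 v2).
  split; split.
  - intros w1 Hw1. destruct (H1 w1 Hw1) as [w2 [Hw2 [_ [_ Hb]]]].
    destruct (S1 w2 Hw2) as [v2 [Hv2 Hr]]. destruct (Hb v2 Hr) as [v1 [Hr1 Hbv]].
    exists v1; split; auto. split; [exists w1; auto | eauto].
  - intros v1 [[w1 [? ?]] _]; eauto.
  - intros v1 [_ [v2 [? ?]]]; eauto.
  - intros v2 Hv2. destruct (S2 v2 Hv2) as [w2 [Hw2 Hr]].
    destruct (H2 w2 Hw2) as [w1 [Hw1 [_ [_ Hb]]]].
    destruct (Hb v2 Hr) as [v1 [Hr1 Hbv]].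
    exists v1; split; auto. split; [exists w1; auto | eauto].
Qed.

Lemma inv A : forall f k K1 K2 (T1 : team K1) (T2 : team K2),
  mdepth f <= k -> incl (matoms f) A -> TE A k T1 T2 ->
  (sat K1 T1 f <-> sat K2 T2 f).
Proof.
  induction f; intros k K1 K2 T1 T2 Hd Hat HT; simpl in *.
  - destruct HT as [H1 H2]. split.
    + intros H w2 Hw2. destruct (H2 w2 Hw2) as [w1 [Hw1 Hb]].
      apply (bis_ml A m k K1 K2 w1 w2); auto.
    + intros H w1 Hw1. destruct (H1 w1 Hw1) as [w2 [Hw2 Hb]].
      apply (bis_ml A m k K1 K2 w1 w2); auto.
  - rewrite (IHf k K1 K2 T1 T2); tauto.
  - apply incl_app_inv in Hat as [Ha1 Ha2].
    rewrite (IHf1 k K1 K2 T1 T2), (IHf2 k K1 K2 T1 T2); try tauto; lia.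
  - apply incl_app_inv in Hat as [Ha1 Ha2]. split.
    + intros H S2 U2 Hs HS2.
      destruct (split_lemma A k K1 K2 T1 T2 S2 U2 HT Hs) as [S1 [U1 [Hs1 [E1 E2]]]].
      apply (IHf2 k K1 K2 U1 U2); auto; [lia|].
      apply (H S1 U1 Hs1). apply (IHf1 k K1 K2 S1 S2); auto; lia.
    + intros H S1 U1 Hs HS1.
      destruct (split_lemma A k K2 K1 T2 T1 S1 U1 (TE_sym _ _ _ _ _ _ HT) Hs)
        as [S2 [U2 [Hs2 [E1 E2]]]].
      apply (IHf2 k K1 K2 U1 U2); auto; [lia| apply TE_sym; auto |].
      apply (H S2 U2 Hs2). apply (IHf1 k K1 K2 S1 S2); auto; [lia|apply TE_sym; auto].
  - destruct k as [|k]; [lia|].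
    apply (IHf k); auto; [lia|]. apply image_lemma; auto.
  - destruct k as [|k]; [lia|]. split.
    + intros H T2' Hs.
      destruct (succ_lemma A k K1 K2 T1 T2 T2' HT Hs) as [T1' [Hs1 E]].
      apply (IHf k K1 K2 T1' T2'); auto; lia.
    + intros H T1' Hs.
      destruct (succ_lemma A k K2 K1 T2 T1 T1' (TE_sym _ _ _ _ _ _ HT) Hs) as [T2' [Hs2 E]].
      apply (IHf k K1 K2 T1' T2'); auto; [lia|apply TE_sym; auto].
Qed.

Variable p0 : P.
Definition top : ML P := MLneg (MLand (MLatom p0) (MLneg (MLatom p0))).
Definition lit (g : ML P) (b : bool) := if b then g else MLneg g.
Fixpoint conj (F : list (ML P)) (s : list bool) : ML P :=
  match F, s with g :: F', b :: s' => MLand (lit g b) (conj F' s') | _, _ => top end.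
Definition bval (Q : Prop) : bool := if excluded_middle_informative Q then true else false.
Definition pat (K : Kripke P) (w : world K) (F : list (ML P)) : list bool :=
  map (fun g => bval (ml_sat K w g)) F.
Fixpoint allpat (n : nat) : list (list bool) := match n with
  | 0 => [[]] | S n => map (cons true) (allpat n) ++ map (cons false) (allpat n) end.
Fixpoint hint (A : list P) (k : nat) : list (ML P) := match k with
  | 0 => map MLatom A
  | S k => map MLatom A ++ map (fun s => MLdia (conj (hint A k) s)) (allpat (length (hint A k)))
  end.

Lemma allpat_in : forall s, In s (allpat (length s)).
Proof.
  induction s as [|b s IH]; simpl; auto.
  apply in_or_app. destruct b; [left|right]; apply in_map; auto.
Qed.

Lemma length_pat K w F : length (pat K w F) = length F.
Proof. unfold pat; apply length_map. Qed.

Lemma conj_pat K w F : ml_sat K w (conj F (pat K w F)).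
Proof.
  induction F; simpl; [tauto|]. split; auto.
  unfold lit, bval; destruct (excluded_middle_informative (ml_sat K w a)); simpl; auto.
Qed.

Lemma conj_sat K w : forall F s, ml_sat K w (conj F s) -> length s = length F -> pat K w F = s.
Proof.
  induction F; destruct s; simpl; intros H Hl; try discriminate; auto.
  destruct H as [H1 H2]. f_equal; [|apply IHF; auto].
  unfold lit, bval in *; destruct b; destruct (excluded_middle_informative (ml_sat K w a)); simpl in *; tauto.
Qed.

Definition agree {K1 K2 : Kripke P} (w1 : world K1) (w2 : world K2) (F : list (ML P)) :=
  forall g, In g F -> (ml_sat K1 w1 g <-> ml_sat K2 w2 g).

Lemma pat_agree K1 K2 (w1 : world K1) (w2 : world K2) F :
  pat K1 w1 F = pat K2 w2 F -> agree w1 w2 F.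
Proof.
  induction F; simpl; intros H g Hg; [contradiction|].
  injection H as H1 H2. destruct Hg as [<-|Hg]; [|apply IHF; auto].
  unfold bval in H1. destruct (excluded_middle_informative (ml_sat K1 w1 a));
    destruct (excluded_middle_informative (ml_sat K2 w2 a)); try discriminate; tauto.
Qed.

Lemma agree_pat K1 K2 (w1 : world K1) (w2 : world K2) F :
  agree w1 w2 F -> pat K1 w1 F = pat K2 w2 F.
Proof.
  induction F; simpl; intros H; auto. f_equal.
  - unfold bval. specialize (H a (or_introl eq_refl)).
    destruct (excluded_middle_informative (ml_sat K1 w1 a));
    destruct (excluded_middle_informative (ml_sat K2 w2 a)); tauto.
  - apply IHF. intros g Hg; apply H; right; auto.
Qed.

Lemma hint_forth A k
  (IH : forall K1 K2 (w1 : world K1) (w2 : world K2), agree w1 w2 (hint A k) -> bis A k w1 w2)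
  K1 K2 (w1 : world K1) (w2 : world K2) :
  agree w1 w2 (hint A (S k)) ->
  forall v1, rel K1 w1 v1 -> exists v2, rel K2 w2 v2 /\ bis A k v1 v2.
Proof.
  intros H v1 Hr.
  set (s := pat K1 v1 (hint A k)).
  assert (Hin : In (MLdia (conj (hint A k) s)) (hint A (S k))).
  { simpl. apply in_or_app; right. apply (in_map (fun s => MLdia (conj (hint A k) s))).
    rewrite <- (length_pat K1 v1). apply allpat_in. }
  destruct (proj1 (H _ Hin)) as [v2 [Hr2 Hc]].
  { exists v1; split; auto. apply conj_pat. }
  exists v2; split; auto. apply IH, pat_agree.
  symmetry; apply conj_sat; auto. unfold s; apply length_pat.
Qed.

Lemma hint_bis A : forall k K1 K2 (w1 : world K1) (w2 : world K2),
  agree w1 w2 (hint A k) -> bis A k w1 w2.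
Proof.
  induction k; intros K1 K2 w1 w2 H.
  - split; auto. intros p Hp. apply (H (MLatom p)). simpl; apply in_map; auto.
  - split; [|split].
    + intros p Hp. apply (H (MLatom p)). simpl; apply in_or_app; left; apply in_map; auto.
    + apply hint_forth; auto.
    + intros v2 Hv2. assert (H' : agree w2 w1 (hint A (S k))).
      { intros g Hg; symmetry; apply H; auto. }
      destruct (hint_forth A k IHk K2 K1 w2 w1 H' v2 Hv2) as [v1 [? ?]].
      exists v1; split; auto. apply bis_sym; auto.
Qed.

End Main.

Definition isUltra {I : Type} (U : (I -> Prop) -> Prop) : Prop :=
  (forall A B, U A -> U B -> U (fun i => A i /\ B i)) /\
  (forall A B : I -> Prop, (forall i, A i -> B i) -> U A -> U B) /\
  (forall A, U A -> exists i, A i) /\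
  (forall A, U A \/ U (fun i => ~ A i)).

Section UP.
Variable P : Type.
Variable p0 : P.
Variables (I : Type) (K : I -> Kripke P) (d : forall i, world (K i)).
Variable U : (I -> Prop) -> Prop.
Hypothesis HU : isUltra U.

Lemma U_and A B : U A -> U B -> U (fun i => A i /\ B i).
Proof. apply HU. Qed.
Lemma U_mono (A B : I -> Prop) : (forall i, A i -> B i) -> U A -> U B.
Proof. apply HU. Qed.
Lemma U_ex A : U A -> exists i, A i.
Proof. apply HU. Qed.
Lemma U_ult A : U A \/ U (fun i => ~ A i).
Proof. apply HU. Qed.
Lemma U_true : U (fun _ => True).
Proof.
  destruct (U_ult (fun _ => False)) as [H|H].
  - destruct (U_ex _ H) as [_ []].
  - eapply U_mono; [|exact H]; auto.
Qed.
Lemma U_not A : U (fun i => ~ A i) -> ~ U A.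
Proof.
  intros H1 H2. destruct (U_ex _ (U_and _ _ H1 H2)) as [i [? ?]]; auto.
Qed.
Lemma U_list {X : Type} (l : list X) (Q : X -> I -> Prop) :
  (forall x, In x l -> U (Q x)) -> U (fun i => forall x, In x l -> Q x i).
Proof.
  induction l as [|x l IH]; intros H.
  - eapply U_mono; [|apply U_true]. intros i _ x [].
  - eapply U_mono; [|apply (U_and _ _ (H x (or_introl eq_refl)) (IH (fun y Hy => H y (or_intror Hy))))].
    intros i [H1 H2] y [<-|Hy]; auto.
Qed.

Definition UP : Kripke P :=
  {| world := forall i, world (K i);
     rel := fun f g => U (fun i => rel (K i) (f i) (g i));
     val := fun p f => U (fun i => val (K i) p (f i)) |}.

Lemma los : forall a (f : world UP), ml_sat UP f a <-> U (fun i => ml_sat (K i) (f i) a).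
Proof.
  induction a; intros f; simpl.
  - tauto.
  - rewrite IHa. split.
    + intros H. destruct (U_ult (fun i => ml_sat (K i) (f i) a)); tauto.
    + apply U_not.
  - rewrite IHa1, IHa2. split.
    + intros [H1 H2]; apply U_and; auto.
    + intros H; split; (eapply U_mono; [|exact H]); simpl; tauto.
  - rewrite IHa1, IHa2. split.
    + intros [H|H]; (eapply U_mono; [|exact H]); simpl; tauto.
    + intros H. destruct (U_ult (fun i => ml_sat (K i) (f i) a1)) as [H1|H1]; [left; auto|].
      right. eapply U_mono; [|exact (U_and _ _ H H1)]. simpl; tauto.
  - split.
    + intros H. apply NNPP; intros Hn.
      destruct (U_ult (fun i => forall v, rel (K i) (f i) v -> ml_sat (K i) v a)) as [H1|H1]; [tauto|].
      set (g := fun i => epsilon (inhabits (d i)) (fun v => rel (K i) (f i) v /\ ~ ml_sat (K i) v a)).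
      assert (Hg : U (fun i => rel (K i) (f i) (g i) /\ ~ ml_sat (K i) (g i) a)).
      { eapply U_mono; [|exact H1]. intros i Hi. unfold g.
        apply (epsilon_spec (inhabits (d i)) (fun v => rel (K i) (f i) v /\ ~ ml_sat (K i) v a)).
        apply not_all_ex_not in Hi as [v Hv]. exists v. tauto. }
      assert (Hs : ml_sat UP g a).
      { apply H. eapply U_mono; [|exact Hg]. simpl; tauto. }
      apply IHa in Hs. apply (U_not (fun i => ml_sat (K i) (g i) a)); auto.
      eapply U_mono; [|exact Hg]. simpl; tauto.
    + intros H g Hr. apply IHa. eapply U_mono; [|exact (U_and _ _ H Hr)]. simpl.
      intros i [H1 H2]; auto.
  - split.
    + intros [g [Hr Hs]]. apply IHa in Hs.
      eapply U_mono; [|exact (U_and _ _ Hr Hs)]. simpl. intros i [? ?]; eauto.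
    + intros H.
      set (g := fun i => epsilon (inhabits (d i)) (fun v => rel (K i) (f i) v /\ ml_sat (K i) v a)).
      assert (Hg : U (fun i => rel (K i) (f i) (g i) /\ ml_sat (K i) (g i) a)).
      { eapply U_mono; [|exact H]. intros i Hi. unfold g.
        apply (epsilon_spec (inhabits (d i)) (fun v => rel (K i) (f i) v /\ ml_sat (K i) v a)); auto. }
      exists g; split.
      * eapply U_mono; [|exact Hg]. simpl; tauto.
      * apply IHa. eapply U_mono; [|exact Hg]. simpl; tauto.
Qed.

Lemma agree_los (F : list (ML P)) (f : world UP) : U (fun i => agree P (f i) f F).
Proof.
  apply (U_list F (fun g i => ml_sat (K i) (f i) g <-> ml_sat UP f g)).
  intros g _. destruct (classic (ml_sat UP f g)) as [H|H].
  - pose proof H as H0. apply los in H. eapply U_mono; [|exact H]. simpl; tauto.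
  - destruct (U_ult (fun i => ml_sat (K i) (f i) g)) as [H1|H1].
    + apply los in H1; tauto.
    + eapply U_mono; [|exact H1]. simpl; tauto.
Qed.

Variable Tf : forall i, team (K i).
Definition Tstar : team UP := fun f => U (fun i => Tf i (f i)).

Lemma TE_ae A k : U (fun i => TE P A k Tstar (Tf i)).
Proof.
  set (F := hint P p0 A k). set (Ss := allpat (length F)).
  assert (H1 : U (fun i => forall s, In s Ss ->
            (exists f, Tstar f /\ pat P UP f F = s) -> exists x, Tf i x /\ pat P (K i) x F = s)).
  { apply (U_list Ss (fun s i => (exists f, Tstar f /\ pat P UP f F = s) -> exists x, Tf i x /\ pat P (K i) x F = s)).
    intros s _. destruct (classic (exists f, Tstar f /\ pat P UP f F = s)) as [[f [Hf Hp]]|Hn].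
    - eapply U_mono; [|exact (U_and _ _ Hf (agree_los F f))].
      intros i [Ht Ha] _. exists (f i); split; auto. rewrite <- Hp. apply agree_pat; auto.
    - eapply U_mono; [|apply U_true]. intros i _ H; tauto. }
  assert (H2 : U (fun i => forall s, In s Ss ->
            (exists x, Tf i x /\ pat P (K i) x F = s) -> exists f, Tstar f /\ pat P UP f F = s)).
  { apply (U_list Ss (fun s i => (exists x, Tf i x /\ pat P (K i) x F = s) -> exists f, Tstar f /\ pat P UP f F = s)).
    intros s _. destruct (U_ult (fun i => exists x, Tf i x /\ pat P (K i) x F = s)) as [HG|HG].
    - set (g := fun i => epsilon (inhabits (d i)) (fun x => Tf i x /\ pat P (K i) x F = s)).
      assert (Hg : U (fun i => Tf i (g i) /\ pat P (K i) (g i) F = s)).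
      { eapply U_mono; [|exact HG]. intros i Hi. unfold g.
        apply (epsilon_spec (inhabits (d i)) (fun x => Tf i x /\ pat P (K i) x F = s)); auto. }
      assert (Hgs : pat P UP g F = s).
      { destruct (U_ex _ (U_and _ _ Hg (agree_los F g))) as [i [[_ Hp] Ha]].
        rewrite <- Hp. symmetry; apply agree_pat; auto. }
      eapply U_mono; [|apply U_true]. intros i _ _. exists g; split; auto.
      eapply U_mono; [|exact Hg]. simpl; tauto.
    - eapply U_mono; [|exact HG]. intros i Hi H; exfalso; exact (Hi H). }
  eapply U_mono; [|exact (U_and _ _ H1 H2)]. intros i [G1 G2]. split.
  - intros f Hf. destruct (G1 (pat P UP f F)) as [x [Hx Hp]].
    + unfold Ss. rewrite <- (length_pat P UP f F). apply allpat_in.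
    + eauto.
    + exists x; split; auto. apply hint_bis with (p0 := p0). apply pat_agree. auto.
  - intros x Hx. destruct (G2 (pat P (K i) x F)) as [f [Hf Hp]].
    + unfold Ss. rewrite <- (length_pat P (K i) x F). apply allpat_in.
    + eauto.
    + exists f; split; auto. apply hint_bis with (p0 := p0). apply pat_agree. auto.
Qed.

Lemma team_los f : U (fun i => sat (K i) (Tf i) f) <-> sat UP Tstar f.
Proof.
  pose proof (TE_ae (matoms P f) (mdepth P f)) as HT. split.
  - intros H. destruct (U_ex _ (U_and _ _ H HT)) as [i [Hs Ht]].
    apply (inv P (matoms P f) f (mdepth P f) UP (K i) Tstar (Tf i)); auto. apply incl_refl.
  - intros H. eapply U_mono; [|exact HT]. intros i Ht.
    apply (inv P (matoms P f) f (mdepth P f) UP (K i) Tstar (Tf i)); auto. apply incl_refl.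
Qed.
End UP.

Section Opt.
Variable P : Type.
Definition optK (K : Kripke P) : Kripke P :=
  {| world := option (world K);
     rel := fun a b => match a, b with Some x, Some y => rel K x y | _, _ => False end;
     val := fun p a => match a with Some x => val K p x | None => False end |}.
Definition liftT {K : Kripke P} (T : team K) : team (optK K) :=
  fun a => match a with Some x => T x | None => False end.

Lemma bis_opt A K : forall k (w : world K), bis P A k w (Some w : world (optK K)).
Proof.
  induction k; intros w; split; simpl; try tauto.
  split.
  - intros v Hv. exists (Some v); auto.
  - intros [v|] Hv; [|contradiction]. exists v; auto.
Qed.

Lemma sat_opt K (T : team K) f : sat K T f <-> sat (optK K) (liftT T) f.
Proof.
  apply (inv P (matoms P f) f (mdepth P f)); auto; [apply incl_refl|]. split.
  - intros w Hw. exists (Some w); split; auto. apply bis_opt.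
  - intros [w|] Hw; [|contradiction]. exists w; split; auto. apply bis_opt.
Qed.
End Opt.
From mathcomp Require Import all_boot classical_sets boolp filter.

Lemma ultra_exists (I : Type) (le : I -> I -> Prop) (i0 : I)
  (lerefl : forall a, le a a)
  (dir : forall a b, exists c, le a c /\ le b c /\ forall d, le c d -> le a d /\ le b d) :
  exists U : (I -> Prop) -> Prop, isUltra U /\ forall j, U (fun i => le j i).
Proof.
pose F : set_system I := fun A => exists j, forall i, le j i -> A i.
have FF : ProperFilter F.
  split.
    by move=> [j Hj]; exact: (Hj j (lerefl j)).
  split.
  - by exists i0.
  - move=> A B [a Ha] [b Hb]; have [c [_ [_ Hc]]] := dir a b.
    by exists c => i /Hc [/Ha ? /Hb ?]; split.
  - by move=> A B AB [j Hj]; exists j => i /Hj /AB.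
have [G [GU FG]] := ultraFilterLemma FF.
exists G; split; last by move=> j; apply: FG; exists j.
split; [|split; [|split]].
- by move=> A B GA GB; exact: (@filterI _ G _ A B GA GB).
- by move=> A B AB GA; exact: (@filterS _ G _ A B AB GA).
- move=> A GA; apply: contrapT => nA.
  have : A = set0 by apply/seteqP; split => // i Ai; apply: nA; exists i.
  by move=> E; rewrite E in GA; exact: (filter_not_empty G GA).
- by move=> A; exact: (in_ultra_setVsetC A GU).
Qed.

Fixpoint mlat0 {P : Type} (a : ML P) : P := match a with
 | MLatom p => p | MLneg a => mlat0 a | MLand a _ | MLor a _ => mlat0 a
 | MLbox a | MLdia a => mlat0 a end.
Fixpoint mat0 {P : Type} (f : MTL P) : P := match f with
 | Mml a => mlat0 a | Msneg f => mat0 f | Mimp f _ | Mlimp f _ => mat0 f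
 | Mbox f | Mdelta f => mat0 f end.

Theorem mainTheorem4 (P : Type) (Phi : MTL P -> Prop) (psi : MTL P) :
  entails Phi psi ->
  exists L : list (MTL P),
    (forall phi, In phi L -> Phi phi) /\
    entails (fun phi => In phi L) psi.
Proof.
  intros Hent. apply NNPP; intros Hno.
  pose (p0 := mat0 psi).
  pose (I := {L : list (MTL P) | forall phi, In phi L -> Phi phi}).
  assert (H : forall i : I, exists K : Kripke P, exists T : team K,
     (forall phi, In phi (proj1_sig i) -> sat K T phi) /\ ~ sat K T psi).
  { intros [L HL]. apply NNPP; intros Hn. apply Hno. exists L. split; [exact HL|].
    intros K T HK. apply NNPP; intros Hs. apply Hn. exists K, T. split; [exact HK|exact Hs]. }
  pose (Kc := fun i => proj1_sig (ClassicalEpsilon.constructive_indefinite_description _ (H i))).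
  assert (H2 : forall i, exists T : team (Kc i),
     (forall phi, In phi (proj1_sig i) -> sat (Kc i) T phi) /\ ~ sat (Kc i) T psi).
  { intros i. exact (proj2_sig (ClassicalEpsilon.constructive_indefinite_description _ (H i))). }
  pose (Tc := fun i => proj1_sig (ClassicalEpsilon.constructive_indefinite_description _ (H2 i))).
  assert (HT : forall i, (forall phi, In phi (proj1_sig i) -> sat (Kc i) (Tc i) phi) /\ ~ sat (Kc i) (Tc i) psi).
  { intros i. exact (proj2_sig (ClassicalEpsilon.constructive_indefinite_description _ (H2 i))). }
  pose (K' := fun i => optK P (Kc i)).
  pose (T' := fun i => @liftT P (Kc i) (Tc i) : team (K' i)).
  pose (d := fun i => (None : world (K' i))).
  pose (i0 := exist (fun L => forall phi, In phi L -> Phi phi) [] (fun phi (H : In phi []) => match H with end) : I).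
  destruct (ultra_exists I (fun a b => incl (proj1_sig a) (proj1_sig b)) i0) as [U [HU HUj]].
  { intros a. apply incl_refl. }
  { intros [a Ha] [b Hb].
    exists (exist (fun L => forall phi, In phi L -> Phi phi) (a ++ b)
      (fun phi Hin => match in_app_or a b phi Hin with or_introl h => Ha phi h | or_intror h => Hb phi h end)).
    simpl. split; [apply incl_appl, incl_refl|]. split; [apply incl_appr, incl_refl|].
    intros e He. split; eapply incl_tran; [| exact He | | exact He]; [apply incl_appl | apply incl_appr]; apply incl_refl. }
  assert (Hsat : sat (UP P I K' U) (Tstar P I K' U T') psi).
  { apply Hent. intros phi Hphi.
    apply (team_los P p0 I K' d U HU T' phi).
    pose (j := exist (fun L => forall phi, In phi L -> Phi phi) [phi]
       (fun x (Hx : In x [phi]) => match Hx with or_introl e => eq_ind phi Phi Hphi x e | or_intror f => match f with end end) : I).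
    eapply (U_mono I U HU); [|exact (HUj j)].
    intros i Hi. apply (proj1 (sat_opt P (Kc i) (Tc i) phi)). apply (proj1 (HT i)). apply Hi. simpl; left; reflexivity. }
  apply (team_los P p0 I K' d U HU T' psi) in Hsat.
  destruct (U_ex I U HU _ Hsat) as [i Hi].
  apply (proj2 (HT i)). apply (proj2 (sat_opt P (Kc i) (Tc i) psi)). exact Hi.
Qed.
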